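(* Let $M(\mu(u))$ be the Verma module over the Yangian $\mathrm{Y}(\mathfrak{sl}_2)$ with highest vector $1_\mu$, where $\mu(u)=P(u)/Q(u)$ (as a Laurent expansion at $u=\infty$) for monic polynomials $P(u),Q(u)$ in $u$ of degree $p$. Then for any integer $s\ge p$ there exist constants $c_0,\dots,c_{s-1}\in\mathbb{C}$ such that the vector $\zeta=c_0f^{(0)}1_\mu+\cdots+c_{s-1}f^{(s-1)}1_\mu+f^{(s)}1_\mu$ satisfies $e(u)\,\zeta=0$, i.e. $e^{(r)}\zeta=0$ for all $r\ge0$.
   Context: The Yangian $\mathrm{Y}(\mathfrak{sl}_2)$ is the associative algebra over $\mathbb{C}$ with generators $e^{(r)},h^{(r)},f^{(r)}$, $r\ge0$, and relations $[h^{(r)},h^{(s)}]=0$, $[e^{(r)},f^{(s)}]=h^{(r+s)}$, $[h^{(0)},e^{(s)}]=2e^{(s)}$, $[h^{(0)},f^{(s)}]=-2f^{(s)}$, $[h^{(r+1)},e^{(s)}]-[h^{(r)},e^{(s+1)}]=h^{(r)}e^{(s)}+e^{(s)}h^{(r)}$, $[h^{(r+1)},f^{(s)}]-[h^{(r)},f^{(s+1)}]=-(h^{(r)}f^{(s)}+f^{(s)}h^{(r)})$, $[e^{(r+1)},e^{(s)}]-[e^{(r)},e^{(s+1)}]=e^{(r)}e^{(s)}+e^{(s)}e^{(r)}$, $[f^{(r+1)},f^{(s)}]-[f^{(r)},f^{(s+1)}]=-(f^{(r)}f^{(s)}+f^{(s)}f^{(r)})$. Write $e(u)=\sum_{r\ge0}e^{(r)}u^{-r-1}$.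 For $\mu(u)=1+\mu^{(0)}u^{-1}+\mu^{(1)}u^{-2}+\cdots$, the Verma module $M(\mu(u))$ is the quotient of $\mathrm{Y}(\mathfrak{sl}_2)$ by the left ideal generated by $e^{(r)}$ and $h^{(r)}-\mu^{(r)}$, $r\ge0$; $1_\mu$ is the image of $1$. *)

(* Defs.v *)
From mathcomp Require Import all_boot all_algebra.
From mathcomp Require Import complex Rstruct.

Set Implicit Arguments.
Unset Strict Implicit.
Unset Printing Implicit Defensive.
Import GRing.Theory.
Local Open Scope ring_scope.

Definition C : numClosedFieldType := complex Rdefinitions.R.

Inductive ygen : Type := GE of nat | GH of nat | GF of nat.

(* formal noncommutative expressions; [Scal c] is c * 1 *)
Inductive yterm : Type :=
| Gen of ygen
| Scal of C
| Add of yterm & yterm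
| Mul of yterm & yterm.

Definition tE r := Gen (GE r).
Definition tH r := Gen (GH r).
Definition tF r := Gen (GF r).
Definition tneg (a : yterm) := Mul (Scal (-1)) a.
Definition tsub (a b : yterm) := Add a (tneg b).
Definition tcomm (a b : yterm) := tsub (Mul a b) (Mul b a).

(* Equality in the Yangian Y(sl_2): the smallest congruence containing the
   axioms of an associative unital C-algebra and the defining relations. *)
Inductive yeq : yterm -> yterm -> Prop :=
| yeq_refl a : yeq a a
| yeq_sym a b : yeq a b -> yeq b a
| yeq_trans a b c : yeq a b -> yeq b c -> yeq a c
| yeq_add a a' b b' : yeq a a' -> yeq b b' -> yeq (Add a b) (Add a' b')
| yeq_mul a a' b b' : yeq a a' -> yeq b b' -> yeq (Mul a b) (Mul a' b')
| yeq_addA a b c : yeq (Add a (Add b c)) (Add (Add a b) c)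
| yeq_addC a b : yeq (Add a b) (Add b a)
| yeq_add0 a : yeq (Add (Scal 0) a) a
| yeq_mulA a b c : yeq (Mul a (Mul b c)) (Mul (Mul a b) c)
| yeq_mul1l a : yeq (Mul (Scal 1) a) a
| yeq_mul1r a : yeq (Mul a (Scal 1)) a
| yeq_mulDl a b c : yeq (Mul (Add a b) c) (Add (Mul a c) (Mul b c))
| yeq_mulDr a b c : yeq (Mul a (Add b c)) (Add (Mul a b) (Mul a c))
| yeq_mul0 a : yeq (Mul (Scal 0) a) (Scal 0)
| yeq_scalD x y : yeq (Add (Scal x) (Scal y)) (Scal (x + y))
| yeq_scalM x y : yeq (Mul (Scal x) (Scal y)) (Scal (x * y))
| yeq_scalC x a : yeq (Mul (Scal x) a) (Mul a (Scal x))
| yrel_hh r s : yeq (tcomm (tH r) (tH s)) (Scal 0)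
| yrel_ef r s : yeq (tcomm (tE r) (tF s)) (tH (r + s))
| yrel_h0e s : yeq (tcomm (tH 0) (tE s)) (Mul (Scal 2) (tE s))
| yrel_h0f s : yeq (tcomm (tH 0) (tF s)) (Mul (Scal (-2)) (tF s))
| yrel_he r s :
    yeq (tsub (tcomm (tH r.+1) (tE s)) (tcomm (tH r) (tE s.+1)))
        (Add (Mul (tH r) (tE s)) (Mul (tE s) (tH r)))
| yrel_hf r s :
    yeq (tsub (tcomm (tH r.+1) (tF s)) (tcomm (tH r) (tF s.+1)))
        (tneg (Add (Mul (tH r) (tF s)) (Mul (tF s) (tH r))))
| yrel_ee r s :
    yeq (tsub (tcomm (tE r.+1) (tE s)) (tcomm (tE r) (tE s.+1)))
        (Add (Mul (tE r) (tE s)) (Mul (tE s) (tE r)))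
| yrel_ff r s :
    yeq (tsub (tcomm (tF r.+1) (tF s)) (tcomm (tF r) (tF s.+1)))
        (tneg (Add (Mul (tF r) (tF s)) (Mul (tF s) (tF r)))).

(* [mu r] is mu^(r), so mu(u) = 1 + sum_r mu r u^(-r-1).
   [verma_eq mu a b] means  a 1_mu = b 1_mu  in M(mu(u)), i.e. a - b lies in
   the left ideal generated by e^(r) and h^(r) - mu^(r) (r >= 0), computed in
   Y(sl_2). *)
Inductive verma_eq (mu : nat -> C) : yterm -> yterm -> Prop :=
| veq_y a b : yeq a b -> verma_eq mu a b
| veq_sym a b : verma_eq mu a b -> verma_eq mu b a
| veq_trans a b c : verma_eq mu a b -> verma_eq mu b c -> verma_eq mu a c
| veq_add a a' b b' :
    verma_eq mu a a' -> verma_eq mu b b' -> verma_eq mu (Add a b) (Add a' b')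
| veq_lmul t a b : verma_eq mu a b -> verma_eq mu (Mul t a) (Mul t b)
| veq_e r : verma_eq mu (tE r) (Scal 0)
| veq_h r : verma_eq mu (tH r) (Scal (mu r)).

(* coefficient of u^(-k) in mu(u) *)
Definition mucoef (mu : nat -> C) (k : nat) : C :=
  if k is k'.+1 then mu k' else 1.

(* mu(u) is the Laurent expansion at u = oo of P(u)/Q(u), i.e.
   Q(u) mu(u) = P(u) as formal Laurent series in u^(-1):
   - the coefficient of u^n (n >= 0) of Q(u) mu(u) equals P`_n;
   - the coefficient of u^(-k-1) (k >= 0) of Q(u) mu(u) vanishes. *)
Definition laurent_expansion (P Q : {poly C}) (mu : nat -> C) : Prop :=
  (forall n : nat,
      \sum_(n <= j < size Q) Q`_j * mucoef mu (j - n) = P`_n) /\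
  (forall k : nat,
      \sum_(0 <= j < size Q) Q`_j * mucoef mu (j + k.+1) = 0).

Fixpoint lin (c : nat -> C) (k : nat) : yterm :=
  if k is k'.+1 then Add (lin c k') (Mul (Scal (c k')) (tF k')) else Scal 0.

Definition zeta (c : nat -> C) (s : nat) : yterm := Add (lin c s) (tF s).

(* Main.v *)
Require Import Defs.
From mathcomp Require Import all_boot all_algebra.
From mathcomp Require Import complex Rstruct.
From mathcomp Require Import zify.
Import GRing.Theory.
Local Open Scope ring_scope.

Section V.

Variable mu : nat -> C.

Lemma vrefl a : verma_eq mu a a.
Proof. exact: veq_y (yeq_refl a). Qed.

Lemma vy {a b} : yeq a b -> verma_eq mu a b.
Proof. exact: veq_y. Qed.

Lemma vmul0r a : verma_eq mu (Mul a (Scal 0)) (Scal 0).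
Proof.
eapply veq_trans; [exact: (vy (yeq_sym (yeq_scalC 0 a)))|].
exact: vy (yeq_mul0 a).
Qed.

Lemma vscalD x y : verma_eq mu (Add (Scal x) (Scal y)) (Scal (x + y)).
Proof. exact: vy (yeq_scalD x y). Qed.

Lemma vEF r k : verma_eq mu (Mul (tE r) (tF k)) (Scal (mu (r + k))).
Proof.
have h1 : verma_eq mu (Mul (Scal (-1)) (Mul (tF k) (tE r))) (Scal 0).
  eapply veq_trans; [exact: (veq_lmul _ (veq_lmul _ (veq_e mu r)))|].
  eapply veq_trans; [exact: (veq_lmul _ (vmul0r _))|].
  eapply veq_trans; [exact: (vy (yeq_scalM _ _))|].
  by rewrite mulr0; exact: vrefl.
have h2 := veq_trans (vy (yrel_ef r k)) (veq_h mu (r + k)).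
rewrite /tcomm /tsub /tneg in h2.
apply: veq_trans h2.
apply: veq_sym.
eapply veq_trans; [exact: (veq_add (vrefl _) h1)|].
eapply veq_trans; [exact: (vy (yeq_addC _ _))|].
exact: vy (yeq_add0 _).
Qed.

Lemma vEaF r a k :
  verma_eq mu (Mul (tE r) (Mul (Scal a) (tF k))) (Scal (a * mu (r + k))).
Proof.
eapply veq_trans; [exact: (vy (yeq_mulA _ _ _))|].
eapply veq_trans; [exact: (vy (yeq_mul (yeq_sym (yeq_scalC a (tE r))) (yeq_refl _)))|].
eapply veq_trans; [exact: (vy (yeq_sym (yeq_mulA _ _ _)))|].
eapply veq_trans; [exact: (veq_lmul _ (vEF r k))|].
exact: vy (yeq_scalM _ _).
Qed.

Lemma vElin r c k :
  verma_eq mu (Mul (tE r) (lin c k)) (Scal (\sum_(0 <= i < k) c i * mu (r + i))).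
Proof.
elim: k => [|k IH] /=.
  by rewrite big_geq //; exact: vmul0r.
eapply veq_trans; [exact: (vy (yeq_mulDr _ _ _))|].
eapply veq_trans; [exact: (veq_add IH (vEaF r (c k) k))|].
rewrite big_nat_recr //=.
exact: vscalD.
Qed.
End V.

Theorem corollary3p7 (p : nat) (P Q : {poly C}) (mu : nat -> C) :
  P \is monic -> Q \is monic -> size P = p.+1 -> size Q = p.+1 ->
  laurent_expansion P Q mu ->
  forall s : nat, (p <= s)%N ->
  exists c : nat -> C,
    forall r : nat, verma_eq mu (Mul (tE r) (zeta c s)) (Scal 0).
Proof.
move=> _ mQ _ sQ [_ L] s hs.
have [d ->] : exists d, s = (p + d)%N by exists (s - p)%N; rewrite subnKC.
exists (fun i => if (d <= i)%N then Q`_(i - d) else 0) => r.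
rewrite /zeta.
eapply veq_trans; [exact: (vy _ (yeq_mulDr _ _ _))|].
eapply veq_trans; [exact: (veq_add (vElin _ _ _ _) (vEF _ _ _))|].
eapply veq_trans; [exact: (vscalD _ _ _)|].
have Qp : Q`_p = 1 by move: mQ; rewrite monicE /lead_coef sQ => /eqP.
have := L (r + d)%N.
rewrite sQ big_nat_recr //= Qp mul1r => H.
suff -> : (\sum_(0 <= i < p + d)
   (if (d <= i)%N then Q`_(i - d) else 0) * mu (r + i) + mu (r + (p + d)))
   = 0 by exact: vrefl.
rewrite -[RHS]H /=.
have mS : forall n m, mucoef mu (n + m.+1) = mu (n + m) by move=> n m; rewrite addnS.
rewrite mS.
under [in RHS]eq_bigr do rewrite mS.
congr (_ + _); last by congr (mu _); lia.
rewrite (big_cat_nat (n := d)) //=; last by lia.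
rewrite big1_seq ?add0r; last first.
  move=> i /andP [_]; rewrite mem_index_iota => /andP [_ hi].
  by rewrite leqNgt hi mul0r.
rewrite -{1}[d]add0n big_addn addnK.
apply: eq_big_nat => i _.
rewrite leq_addl addnK; congr (_ * mu _); lia.
Qed.
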